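(* Let $a \ge 1$ and let $G$ be a non-nilpotent group of order $2^a\cdot 3$ that has a descendant of order $2^a\cdot 9$. Then $F(G) \cong C_2^{a-1}\times C_3$ and $G/O_2(G) \cong S_3$.
   Context: $F(G)$ denotes the Fitting subgroup and $O_2(G)$ the largest normal $2$-subgroup of $G$. The $F$-central series is $\nu_0(G)=F(G)$ and $\nu_{i+1}(G)$ is the smallest normal subgroup $N$ of $F(G)$ with $N\le\nu_i(G)$ such that $\nu_i(G)/N$ is centralized by $F(G)$ and is a direct product of elementary abelian groups; the $F$-class of $G$ is the least $c$ with $\nu_c(G)=1$. If $G$ has $F$-class $c$, a group $H$ is a descendant of $G$ if $H$ has $F$-class $c+1$ and $H/\nu_c(H)\cong G$. *)

(* Defs.v *)
From HB Require Import structures.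
From mathcomp Require Import all_boot all_order all_algebra all_fingroup all_solvable.
Set Implicit Arguments. Unset Strict Implicit. Unset Printing Implicit Defensive.
Local Open Scope group_scope.

(* A finite group Q is a direct product of elementary abelian groups:
   Q is abelian and each of its Sylow p-subgroups 'O_p(Q) is elementary abelian. *)
Definition dprod_elem_abelian (hT : finGroupType) (Q : {set hT}) : bool :=
  abelian Q && [forall p : 'I_#|Q|.+1, prime p ==> p.-abelem 'O_p(Q)].

Definition nu_cand (gT : finGroupType) (G : {group gT}) (M : {set gT})
    (N : {group gT}) : bool :=
  [&& N <| 'F(G), N \subset M,
      ('F(G) / N) \subset 'C(M / N) & dprod_elem_abelian (M / N)].

(* The F-central series; nu_{i+1} is the smallest candidate, i.e. the
   intersection of all candidates (the candidates are closed under intersection). *)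
Fixpoint nu (gT : finGroupType) (G : {group gT}) (i : nat) : {set gT} :=
  match i with
  | 0 => 'F(G)
  | i'.+1 => \bigcap_(N : {group gT} | nu_cand G (nu G i') N) N
  end.

Definition has_Fclass (gT : finGroupType) (G : {group gT}) (c : nat) : Prop :=
  nu G c = 1 /\ forall i, i < c -> nu G i != 1.

Definition descendant (gT hT : finGroupType) (G : {group gT}) (H : {group hT}) : Prop :=
  exists c : nat, [/\ has_Fclass G c, has_Fclass H c.+1 & (H / nu H c) \isog G].

(* Main.v *)
Require Import Defs.
From HB Require Import structures.
From mathcomp Require Import all_boot all_order all_algebra all_fingroup all_solvable.
From mathcomp Require Import all_character.
From mathcomp Require Import zify.
Set Implicit Arguments. Unset Strict Implicit. Unset Printing Implicit Defensive.
Local Open Scope group_scope.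

Lemma dvd_prime_cases (n p : nat) : prime p -> n %| p -> n = 1%N \/ n = p.
Proof. by case/primeP=> _ Hp /Hp /orP[]/eqP; [left|right]. Qed.

Section Aux.
Variable gT : finGroupType.
Implicit Types G H K N Q X : {group gT}.

Lemma small_abelian Q p : prime p -> #|Q| %| p -> abelian Q.
Proof.
move=> pp /(dvd_prime_cases pp) [Q1|Qp].
  by rewrite (card1_trivg Q1) abelian1.
by apply: cyclic_abelian; apply: prime_cyclic; rewrite Qp.
Qed.

Lemma small_dprod Q p : prime p -> #|Q| %| p -> dprod_elem_abelian Q.
Proof.
move=> pp dQ; rewrite /dprod_elem_abelian (small_abelian pp dQ) /=.
apply/forallP=> q; apply/implyP=> pq.
have dX : #|'O_q(Q)| %| p := dvdn_trans (cardSg (pcore_sub _ _)) dQ.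
case: (dvd_prime_cases pp dX) => [X1|Xp].
  by rewrite (card1_trivg X1) abelem1.
have qX : q.-group 'O_q(Q) := pcore_pgroup _ _.
have : (p : nat) \in (q : nat_pred).
  by apply: (pgroupP qX) => //; rewrite Xp.
rewrite inE => /eqP pq'.
by have := prime_abelem pp Xp; rewrite pq'.
Qed.

End Aux.

Section Nu.
Variables (gT : finGroupType) (G : {group gT}).

Lemma nu_props i :
  [/\ group_set (nu G i), nu G i \subset 'F(G) & 'F(G) \subset 'N(nu G i)].
Proof.
elim: i => [|i [gi sF nF]] /=.
  by split; [exact: Fitting_group_set | exact: subxx | exact: normG].
set K := Group gi.
have candK : nu_cand G (nu G i) K.
  apply/and4P; split.
  - by rewrite /normal sF nF.
  - exact: subxx.
  - have -> : nu G i / K = 1 := trivg_quotient K.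
    by rewrite cents1.
  - have -> : nu G i / K = 1 := trivg_quotient K.
    by apply: (@small_dprod _ _ 2) => //; rewrite cards1.
split.
- exact: group_set_bigcap.
- exact: subset_trans (bigcap_inf _ candK) sF.
- apply: norms_bigcap; apply/bigcapsP => N /and4P[/andP[_ nN] _ _ _].
  by [].
Qed.

Definition nuG i : {group gT} := Group (match nu_props i with And3 g _ _ => g end).

Lemma nuGE i : gval (nuG i) = nu G i. Proof. by []. Qed.

Lemma nu_normal i : nuG i <| 'F(G).
Proof. by case: (nu_props i) => _ s n; rewrite /normal s n. Qed.

Lemma nu_cand_self i : nu_cand G (nu G i) (nuG i).
Proof.
apply/and4P; split.
- exact: nu_normal.
- exact: subxx.
- have -> : nu G i / nuG i = 1 := trivg_quotient (nuG i).
  by rewrite cents1.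
- have -> : nu G i / nuG i = 1 := trivg_quotient (nuG i).
  by apply: (@small_dprod _ _ 2) => //; rewrite cards1.
Qed.

Lemma nu_sub_cand i (N : {group gT}) :
  nu_cand G (nu G i) N -> nu G i.+1 \subset N.
Proof. by move=> cN; apply: bigcap_inf. Qed.

Lemma nu_succ i : nu G i.+1 \subset nu G i.
Proof. exact: nu_sub_cand (nu_cand_self i). Qed.

Lemma nu_mono i j : i <= j -> nu G j \subset nu G i.
Proof.
move=> /subnK <-; elim: (j - i) => [|k IH]; first exact: subxx.
by rewrite addSn; apply: subset_trans (nu_succ _) IH.
Qed.

End Nu.

Lemma Z_facts (hT : finGroupType) (H K : {group hT}) (a : nat) :
  #|H| = (2 ^ a * 9)%N -> K \subset H -> K != 1 :> {set hT} ->
  #|H / K| = (2 ^ a * 3)%N -> #|K| = 3 /\ H \subset 'N(K).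
Proof.
move=> cH sKH ntK cq.
rewrite -quotientInorm card_quotient ?subsetIr // in cq.
have sKN : K \subset 'N_H(K) by rewrite subsetI sKH normG.
have LN := Lagrange sKN; rewrite cq in LN.
have dN : #|'N_H(K)| %| #|H| := cardSg (subsetIl _ _).
rewrite -LN cH in dN.
have : #|K| %| 3.
  have e : (2 ^ a * 9 = 3 * (2 ^ a * 3))%N by rewrite mulnCA.
  rewrite e in dN; rewrite -(@dvdn_pmul2r (2 ^ a * 3)) //.
  by rewrite muln_gt0 expn_gt0.
case/(dvd_prime_cases (isT : prime 3)) => [K1|K3].
  by rewrite (card1_trivg K1) eqxx in ntK.
split=> //.
have eN : 'N_H(K) = H.
  apply/eqP; rewrite eqEcard subsetIl -LN K3 cH.
  by rewrite /= [X in _ <= X]mulnCA.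
by rewrite -eN subsetIr.
Qed.


Section HFit.
Variables (hT : finGroupType) (H : {group hT}) (a : nat).
Hypothesis cH : #|H| = (2 ^ a * 9)%N.

Let FH := 'F(H).
Let P := 'O_2(H).
Let Q := 'O_2^'(FH).

Lemma HF_dprod : P \x Q = FH.
Proof. by rewrite /P -p_core_Fitting; apply: nilpotent_pcoreC; apply: Fitting_nil. Qed.

Lemma HQ_dvd9 : #|Q| %| 9.
Proof.
have : #|Q| %| 2 ^ a * 9.
  by rewrite -cH; apply: cardSg; apply: subset_trans (pcore_sub _ _) (Fitting_sub H).
rewrite Gauss_dvdr //.
have : (2^').-nat #|Q| := pcore_pgroup _ _.
rewrite p'natE // => n2.
by rewrite coprime_sym coprimeXl // prime_coprime.
Qed.

Lemma HQ_3group : 3.-group Q.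
Proof.
apply/pgroupP=> q pq dq.
have := dvdn_trans dq HQ_dvd9.
have -> : 9 = (3 ^ 2)%N by [].
rewrite (Euclid_dvdX _ _ pq) andbT => d3.
by rewrite inE -(dvdn_prime2 pq).
Qed.

Lemma HQ_normal : Q <| H.
Proof. by apply: char_normal; apply: char_trans (pcore_char _ _) (Fitting_char H). Qed.

Lemma HP_normalF : P <| FH.
Proof.
by rewrite /P -p_core_Fitting; apply: pcore_normal.
Qed.

Lemma HP_subF : P \subset FH.
Proof. by case/andP: HP_normalF. Qed.

Lemma HFP_card : #|FH / P| = #|Q|.
Proof.
rewrite -divg_normal ?HP_normalF // -(dprod_card HF_dprod) mulKn //.
Qed.

Lemma HP_2group : 2.-group P. Proof. exact: pcore_pgroup. Qed.

End HFit.

Lemma abelian_dvd9 (gT : finGroupType) (X : {group gT}) : #|X| %| 9 -> abelian X.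
Proof.
have -> : 9 = (3 ^ 2)%N by [].
case/dvdn_pfactor => // -[|[|[|m]]] // _ eX.
- by apply: (@small_abelian _ _ 3) => //; rewrite eX.
- by apply: (@small_abelian _ _ 3) => //; rewrite eX.
- exact: (card_p2group_abelian (isT : prime 3) eX).
Qed.

Section HCore.
Variables (hT : finGroupType) (H : {group hT}) (a c : nat).
Hypothesis cH : #|H| = (2 ^ a * 9)%N.
Let Z := nuG H c.
Hypothesis cZ : #|Z| = 3.
Hypothesis nZH : H \subset 'N(Z).

Let FH := 'F(H).
Let P := 'O_2(H).
Let Q := 'O_2^'(FH).

Lemma Z_notsubP (X : {group hT}) : Z \subset X -> X \subset P -> False.
Proof.
move=> sZX sXP.
have d3 : 3 %| #|P| by rewrite -cZ; apply: cardSg; apply: subset_trans sZX sXP.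
by have := pgroupP (HP_2group H) 3 isT d3.
Qed.

Lemma Z_sub_F : Z \subset FH.
Proof. by case/andP: (nu_normal H c). Qed.

Lemma Z_sub_Q : Z \subset Q.
Proof.
apply: pcore_max; last exact: nu_normal.
by apply/pgroupP=> q pq; rewrite cZ (dvdn_prime2 pq (isT : prime 3)) => /eqP ->.
Qed.


Lemma FP_abelian : abelian (FH / P).
Proof. by apply: abelian_dvd9; rewrite (HFP_card H) (HQ_dvd9 cH). Qed.

Lemma case_c1 : c = 1%N -> Q \subset Z -> False.
Proof.
move=> c1 sQZ.
have dQ : #|Q| %| 3 by rewrite -cZ; apply: cardSg.
have cand : nu_cand H (nu H 0) P.
  apply/and4P; split.
  - exact: HP_normalF.
  - exact: HP_subF.
  - by apply: (@small_abelian _ _ 3) => //; rewrite (HFP_card H).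
  - by apply: (@small_dprod _ _ 3) => //; rewrite (HFP_card H).
have := nu_sub_cand cand.
have eZ : nu H 1 = Z by rewrite /Z c1.
rewrite eZ => sZP.
exact: (Z_notsubP (subxx _) sZP).
Qed.

Lemma case_c2 : 2 <= c -> False.
Proof.
move=> c2.
have nPH : H \subset 'N(P) := normal_norm (pcore_normal _ _).
have sZH : Z \subset H := subset_trans Z_sub_F (Fitting_sub H).
have nPZ : Z \subset 'N(P) := subset_trans sZH nPH.
have ePZ : P <*> Z = P * Z := norm_joinEr nPZ.
have cPZ : #|P <*> Z| = (#|P| * 3)%N.
  rewrite ePZ TI_cardMg ?cZ //; apply: coprime_TIg; rewrite cZ.
  have [k ->] := p_natP (HP_2group H).
  by rewrite coprimeXl.
have nPZF : P <*> Z <| FH := normalY (HP_normalF H) (nu_normal H c).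
have sPZF : P <*> Z \subset FH by case/andP: nPZF.
have dFPZ : #|FH / (P <*> Z)| %| 3.
  rewrite card_quotient ?(normal_norm nPZF) //.
  have L := Lagrange sPZF.
  rewrite -(dprod_card (HF_dprod H)) cPZ -mulnA in L.
  have L' : (3 * #|FH : P <*> Z| = #|Q|)%N.
    by apply/eqP; rewrite -(eqn_pmul2l (cardG_gt0 [group of P])) L.
  have := HQ_dvd9 cH; rewrite -L' -[9]/(3 * 3)%N dvdn_pmul2l //.
have cand1 : nu_cand H (nu H 0) (P <*> Z).
  apply/and4P; split => //.
  - by apply: (@small_abelian _ _ 3).
  - by apply: (@small_dprod _ _ 3).
set K1 := nuG H 1.
have sK1 : K1 \subset P <*> Z := nu_sub_cand cand1.
have nK1F : K1 <| FH := nu_normal H 1.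
have nN2F : P :&: K1 <| FH := normalI (HP_normalF H) nK1F.
have nPK1 : K1 \subset 'N(P) := subset_trans sK1 (normal_norm (normalS (joing_subl _ _) sPZF (HP_normalF H))).
have cand2 : nu_cand H (nu H 1) (P :&: K1)%G.
  apply/and4P; split => //.
  - exact: subsetIr.
  - apply: quotient_cents2r; rewrite subsetI; apply/andP; split.
      apply: subset_trans (commgS _ (normal_sub nK1F)) _.
      apply: der1_min; first exact: normal_norm (HP_normalF H).
      exact: FP_abelian.
    by rewrite commg_subr; apply: normal_norm.
  - apply: (@small_dprod _ _ 3) => //.
    rewrite (card_isog (second_isog nPK1)).
    have -> : 3 = #|(P <*> Z) / P|.
      rewrite card_quotient; last by apply: subset_trans sPZF (normal_norm (HP_normalF H)).
      have L := Lagrange (joing_subl P Z).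
      rewrite cPZ in L.
      by apply/eqP; rewrite -(eqn_pmul2l (cardG_gt0 P)) L.
    by apply: cardSg; apply: quotientS.
have s2 : nu H 2 \subset P := subset_trans (nu_sub_cand cand2) (subsetIl _ _).
exact: (Z_notsubP (nu_mono H c2) s2).
Qed.

End HCore.

Lemma div6_cases n : n %| 6 -> 2 %| n -> 2 < n -> n = 6.
Proof.
move=> d6 d2 l2; have := dvdn_leq (isT : 0 < 6) d6.
by move: d6 d2 l2; do 7 (case: n => [|n] //).
Qed.

Lemma D6_of_invol (gT : finGroupType) (Q : {group gT}) x y :
  x \in Q -> y \in Q -> #[x] = 2 -> #[y] = 2 -> x != y -> #|Q| = 6 ->
  Q \isog [set: 'D_6].
Proof.
move=> Qx Qy ox oy nxy cQ.
have := involutions_gen_dihedral ox oy nxy.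
set K := <<[set x; y]>>.
have sKQ : K \subset Q.
  by rewrite gen_subG; apply/subsetP => z; rewrite !inE => /orP[]/eqP ->.
have Kx : x \in K by apply: mem_gen; rewrite !inE eqxx.
have Ky : y \in K by apply: mem_gen; rewrite !inE eqxx orbT.
have cK : #|K| = 6.
  apply: div6_cases; first by rewrite -cQ cardSg.
    by rewrite -ox order_dvdG.
  have s3 : 1 |: [set x; y] \subset K.
    by apply/subsetP => z; rewrite !inE => /orP[/eqP ->|/orP[]/eqP ->] //; rewrite group1.
  apply: leq_trans (subset_leq_card s3).
  rewrite cardsU1 cards2 nxy !inE.
  have x1 : x != 1 by rewrite -order_eq1 ox.
  have y1 : y != 1 by rewrite -order_eq1 oy.
  by rewrite ![1 == _]eq_sym (negPf x1) (negPf y1).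
have eKQ : K = Q.
  by apply/eqP; rewrite eqEcard sKQ cK cQ leqnn.
by rewrite cK eKQ.
Qed.

Lemma order_invol (gT : finGroupType) (t : gT) : t * t = 1 -> t != 1 -> #[t] = 2.
Proof.
move=> tt t1.
have le2 : #[t] <= 2 by apply: order_inf; rewrite expgS expg1 tt.
have : #[t] != 1%N by rewrite order_eq1.
have := order_gt0 t.
by move: le2; case: #[t] => [|[|[|]]].
Qed.

Lemma S3_D6 : [set: 'S_3] \isog [set: 'D_6].
Proof.
pose i0 : 'I_3 := ord0. pose i1 : 'I_3 := inord 1. pose i2 : 'I_3 := inord 2.
have n01 : i0 != i1 by apply/eqP => /(congr1 val); rewrite /= inordK.
have n02 : i0 != i2 by apply/eqP => /(congr1 val); rewrite /= inordK.
have n12 : i1 != i2 by apply/eqP => /(congr1 val); rewrite /= !inordK.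
have t1 : forall j : 'I_3, i0 != j -> tperm i0 j != 1.
  move=> j nj; apply/eqP => /permP/(_ i0); rewrite tpermL perm1 => ej.
  by move: nj; rewrite ej eqxx.
apply: (@D6_of_invol _ _ (tperm i0 i1) (tperm i0 i2)).
- by rewrite inE.
- by rewrite inE.
- exact: order_invol (tperm2 _ _) (t1 _ n01).
- exact: order_invol (tperm2 _ _) (t1 _ n02).
- apply/eqP => /permP/(_ i1); rewrite tpermR tpermD; last first.
  + by rewrite eq_sym.
  + by [].
  move=> e; move: n01; rewrite e eqxx; done.
- by rewrite cardsT card_Sn.
Qed.

Lemma S3_of_card6 (gT : finGroupType) (Q : {group gT}) :
  #|Q| = 6 -> 'O_2(Q) = 1 -> Q \isog [set: 'S_3].
Proof.
move=> cQ O2Q.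
have [P sP] := Sylow_exists 2 Q.
have cP : #|P| = 2.
  by rewrite (card_Hall sP) cQ p_part.
have sPQ : P \subset Q := pHall_sub sP.
have nnP : ~~ (Q \subset 'N(P)).
  apply/negP => nPQ.
  have : P \subset 'O_2(Q).
    by apply: pcore_max; [exact: pHall_pgroup sP | rewrite /normal sPQ nPQ].
  by rewrite O2Q => /subset_leq_card; rewrite cards1 cP.
have [g Qg nPg] := subsetPn nnP.
have [x ePx] : exists x, P :=: <[x]>.
  by apply/cyclicP; apply: prime_cyclic; rewrite cP.
have ox : #[x] = 2 by rewrite /order -ePx cP.
have Qx : x \in Q by apply: (subsetP sPQ); rewrite ePx cycle_id.
apply: isog_trans (isog_symr S3_D6).
apply: (@D6_of_invol _ _ x (x ^ g)) => //.
- by rewrite groupJ.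
- by rewrite orderJ.
- apply/eqP => exg; move: nPg; rewrite inE ePx -cycleJ -exg.
  by rewrite subxx.
Qed.


Lemma O2_abelem (gT : finGroupType) (G : {group gT}) :
  nu G 1 = 1 -> 2.-abelem 'O_2(G).
Proof.
move=> nu1.
have sOF : 'O_2(G) \subset 'F(G) by rewrite -p_core_Fitting pcore_sub.
have key : forall N : {group gT}, nu_cand G (nu G 0) N ->
    forall x y, x \in 'O_2(G) -> y \in 'O_2(G) ->
    (x ^+ 2 \in N) && ([~ x, y] \in N).
  move=> N /and4P[nNF sNF _ /andP[_ dN]] x y Ox Oy.
  have Fx := subsetP sOF x Ox; have Fy := subsetP sOF y Oy.
  have [lt1|gt1] := leqP #|'F(G) / N| 1.
    have sFN : 'F(G) \subset N.
      rewrite -quotient_sub1 ?normal_norm //.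
      by rewrite (card_le1_trivg lt1).
    by rewrite !(subsetP sFN) ?groupX ?groupR.
  have nNx := subsetP (normal_norm nNF) x Fx.
  have nNy := subsetP (normal_norm nNF) y Fy.
  have sOq : 'O_2(G) / N \subset 'O_2('F(G) / N).
    by rewrite -p_core_Fitting; apply: morphim_pcore.
  have lt2 : 2 < #|'F(G) / N|.+1 by [].
  have := forallP dN (Ordinal lt2); rewrite /= => ab2.
  have /(abelemP (isT : prime 2)) [abO sqO] := ab2.
  have cx := subsetP sOq _ (mem_quotient N Ox).
  have cy := subsetP sOq _ (mem_quotient N Oy).
  apply/andP; split; apply: coset_idr; rewrite ?groupX ?groupR //.
    by rewrite morphX ?sqO.
  rewrite morphR //; apply/eqP/commgP.
  exact: (centsP abO).
have inNu : forall x y, x \in 'O_2(G) -> y \in 'O_2(G) ->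
    (x ^+ 2 = 1) /\ ([~ x, y] = 1).
  move=> x y Ox Oy.
  have h1 : x ^+ 2 \in nu G 1.
    by apply/bigcapP => N cN; case/andP: (key N cN x y Ox Oy).
  have h2 : [~ x, y] \in nu G 1.
    by apply/bigcapP => N cN; case/andP: (key N cN x y Ox Oy).
  by rewrite nu1 in h1 h2; split; apply/set1gP.
apply/(abelemP (isT : prime 2)); split.
  apply/centsP => x Ox y Oy; apply/commgP.
  by rewrite ?(inNu y x Oy Ox).2 ?(inNu x y Ox Oy).2.
by move=> x Ox; rewrite (inNu x x Ox Ox).1.
Qed.

Section GSide.
Variables (gT : finGroupType) (G : {group gT}) (a : nat).
Hypothesis a1 : 1 <= a.
Hypothesis cG : #|G| = (2 ^ a * 3)%N.
Hypothesis nnG : ~~ nilpotent G.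

Lemma G_sol : solvable G.
Proof.
apply: Burnside_p_a_q_b.
suff : size (primes #|G|) <= size [:: 2; 3] by [].
apply: uniq_leq_size; first exact: primes_uniq.
move=> p; rewrite mem_primes => /and3P[pp _]; rewrite cG Euclid_dvdM //.
rewrite Euclid_dvdX // !dvdn_prime2 //.
by case/orP => [/andP[/eqP -> _]|/eqP ->]; rewrite !inE.
Qed.

Lemma G_F_nt : 'F(G) != 1 :> {set gT}.
Proof.
rewrite (trivg_Fitting G_sol); apply/eqP => G1.
by move: cG; rewrite G1 cards1 => /esym/eqP; rewrite muln_eq1 andbF.
Qed.

Hypothesis ntO3 : 'O_3(G) != 1 :> {set gT}.

Let T := 'O_3(G).
Let O2 := 'O_2(G).

Lemma cO3 : #|T| = 3.
Proof.
have [k ek] := p_natP (pcore_pgroup 3 G : 3.-group T).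
have : #|T| %| 3.
  have : #|T| %| 2 ^ a * 3 by rewrite -cG cardSg ?pcore_sub.
  rewrite Gauss_dvdr // ek coprime_sym.
  by apply: coprimeXl; apply: coprimeXr.
case/(dvd_prime_cases (isT : prime 3)) => // T1.
by move: ntO3; rewrite (card1_trivg T1) eqxx.
Qed.

Lemma sylow2 : exists P2 : {group gT}, [/\ P2 \subset G, 2.-group P2 & #|P2| = (2 ^ a)%N].
Proof.
have [P2 sP] := Sylow_exists 2 G.
exists P2; split; first exact: pHall_sub sP.
  exact: pHall_pgroup sP.
rewrite (card_Hall sP) cG partnM ?expn_gt0 // partnX.
have -> : (2`_2 = 2)%N by rewrite p_part.
have -> : (3`_2 = 1)%N by rewrite p_part.
by rewrite muln1.
Qed.

Lemma cO2 : #|O2| = (2 ^ a.-1)%N.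
Proof.
have [k ek] := p_natP (pcore_pgroup 2 G : 2.-group O2).
have nO2 : O2 <| G := pcore_normal _ _.
have nT : T <| G := pcore_normal _ _.
have cTI : forall (A : {group gT}), 2.-group A -> A :&: T = 1.
  move=> A pA; apply: coprime_TIg; rewrite cO3.
  have [j ->] := p_natP pA.
  by apply: coprimeXl.
have ka : k <= a.
  have : #|O2| %| 2 ^ a * 3 by rewrite -cG cardSg ?pcore_sub.
  rewrite ek Gauss_dvdl; last by apply: coprimeXl.
  by rewrite dvdn_Pexp2l.
have kna : k != a.
  apply/eqP => ka'; apply/negP: nnG; apply/negPn.
  have sF : O2 * T \subset 'F(G).
    have h : forall p : nat, 'O_p(G) \subset 'F(G).
      by move=> p; rewrite -(p_core_Fitting p) pcore_sub.
    by rewrite /O2 /T mulG_subG; apply/andP; split; apply: h.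
  have cM : #|O2 * T| = #|G|.
    by rewrite TI_cardMg ?cTI ?pcore_pgroup // ek ka' cO3 cG.
  have eF : 'F(G) = G.
    apply/eqP; rewrite eqEcard Fitting_sub -cM.
    exact: subset_leq_card.
  by rewrite -eF Fitting_nil.
have ak : a <= k.+1.
  have [P2 [sP2 pP2 cP2]] := sylow2.
  have [t et] : exists t, T = <[t]>.
    by apply/cyclicP; apply: prime_cyclic; rewrite cO3.
  set C := 'C_G(T).
  have iC : #|G : C| <= 2.
    rewrite /C et cent_cycle index_cent1.
    have <- : #|T :\ 1| = 2.
      by have := cardsD1 1 T; rewrite group1 cO3 => -[].
    apply: subset_leq_card; apply/subsetP => u /imsetP[g Gg ->].
    rewrite !inE conjg_eq1 memJ_norm; last first.
      exact: subsetP (normal_norm nT) g Gg.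
    have Tt : t \in T by rewrite et cycle_id.
    rewrite Tt andbT; apply/eqP => t1.
    by move: ntO3; rewrite -/T et t1 cycle1 eqxx.
  have sCG : C \subset G := subsetIl _ _.
  have LC := Lagrange sCG.
  set X := P2 :&: C.
  have MC := mul_cardG P2 [group of C].
  have sPC : P2 * C \subset G by rewrite mulG_subG sP2.
  have h1 : (#|P2| * #|C| <= 2 * #|X| * #|C|)%N.
    rewrite MC -/X mulnAC leq_mul2r; apply/orP; right.
    apply: leq_trans (subset_leq_card sPC) _.
    by rewrite -LC mulnC leq_mul2r iC orbT.
  have h2 : (#|P2| <= 2 * #|X|)%N.
    by rewrite -(leq_pmul2r (cardG_gt0 [group of C])).
  have sXO : X \subset O2.
    apply: pcore_max; first exact: pgroupS (subsetIl _ _) pP2.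
    rewrite /normal (subset_trans (subsetIl _ _) sP2) /=.
    have eG : P2 * T = G.
      apply/eqP; rewrite eqEcard mulG_subG sP2 pcore_sub /=.
      by rewrite TI_cardMg ?cTI // cP2 cO3 cG.
    rewrite -{1}eG mulG_subG; apply/andP; split.
      apply: normsI; first exact: normG.
      apply: subset_trans sP2 _.
      have := subcent_normal G T; rewrite (setIidPl (normal_norm nT)).
      by move/normal_norm.
    apply: cents_norm; rewrite centsC.
    by apply: subset_trans (subsetIr _ _) (subsetIr _ _).
  have := leq_trans h2 (leq_mul (leqnn 2) (subset_leq_card sXO)).
  rewrite cP2 ek -expnS leq_exp2l //.
rewrite ek; congr (_ ^ _)%N.
move/eqP: kna => kna; lia.
Qed.

Lemma FG_iso : 2.-abelem 'O_2(G) ->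
  'F(G) \isog [set: ('rV['Z_2]_(a.-1) * 'Z_3)%type].
Proof.
move=> abO2.
have D : 'O_2(G) \x 'O_2^'('F(G)) = 'F(G).
  by rewrite -(p_core_Fitting 2); apply: nilpotent_pcoreC; apply: Fitting_nil.
set B := 'O_2^'('F(G)).
have cB : #|B| = 3.
  have d1 : #|B| %| 3.
    have : #|B| %| 2 ^ a * 3.
      by rewrite -cG; apply: cardSg; apply: subset_trans (pcore_sub _ _) (Fitting_sub G).
    rewrite Gauss_dvdr //.
    have : (2^').-nat #|B| := pcore_pgroup _ _.
    rewrite p'natE // => n2.
    by rewrite coprime_sym coprimeXl // prime_coprime.
  have d2 : 3 %| #|B|.
    rewrite -cO3; apply: cardSg; apply: pcore_max.
      by apply/pgroupP => q pq; rewrite cO3 (dvdn_prime2 pq (isT : prime 3)) => /eqP ->.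
    by have := pcore_normal 3 'F(G); rewrite p_core_Fitting.
  by apply/eqP; rewrite eqn_dvd d1 d2.
have eT : [set: ('rV['Z_2]_(a.-1) * 'Z_3)%type] =
          setX [set: 'rV['Z_2]_(a.-1)] [set: 'Z_3].
  by apply/setP => -[u v]; rewrite !inE.
rewrite eT.
apply: (isog_dprod D (setX_dprod [set: 'rV['Z_2]_(a.-1)]%G [set: 'Z_3]%G)).
  rewrite -morphim_pairg1.
  apply: isog_trans (sub_isog (subsetT _) (injm_pairg1 _ _)).
  rewrite (isog_abelem_card _ abO2) cardsT card_mx card_ord mul1n -cO2 eqxx andbT.
  exact: (mx_Fp_abelem 1 (a.-1) (isT : prime 2)).
rewrite -morphim_pair1g.
apply: isog_trans (sub_isog (subsetT _) (injm_pair1g _ _)).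
rewrite (isog_abelem_card _ (prime_abelem (isT : prime 3) cB)).
rewrite cardsT card_ord cB eqxx andbT.
by apply: prime_abelem => //; rewrite cardsT card_ord.
Qed.

End GSide.

Theorem lemma6p1 (gT : finGroupType) (G : {group gT}) (a : nat) :
  1 <= a ->
  #|G| = (2 ^ a * 3)%N ->
  ~~ nilpotent G ->
  (exists (hT : finGroupType) (H : {group hT}),
      #|H| = (2 ^ a * 9)%N /\ descendant G H) ->
  'F(G) \isog [set: ('rV['Z_2]_(a.-1) * 'Z_3)%type] /\
  (G / 'O_2(G)) \isog [set: 'S_3].
Proof.
move=> a1 cG nnG [hT [H [cH [c [[nuGc FGc] [nuHc FHc] iso]]]]].
set Z := nuG H c.
have ntZ : Z != 1 :> {set hT} by have := FHc c (ltnSn c).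
have sZH : Z \subset H.
  by apply: subset_trans (Fitting_sub H); case/andP: (nu_normal H c).
have cq : #|H / Z| = (2 ^ a * 3)%N by rewrite (card_isog iso) cG.
have [cZ nZH] := Z_facts cH sZH ntZ cq.
have c1 : c = 1%N.
  case: (ltngtP c 1) => // [c0|c2].
    have c00 : c = 0%N by move: c0; rewrite ltnS leqn0 => /eqP.
    by move: (G_F_nt cG); rewrite -[X in X != _]/(nu G 0) -c00 nuGc eqxx.
  by case: (case_c2 cH cZ c2).
move: nuGc; rewrite c1 => nuG1.
have abO2 := O2_abelem nuG1.
have ntO3 : 'O_3(G) != 1 :> {set gT}.
  apply/negP => /eqP O31.
  have iso3 := isog_pcore 3 iso.
  have c3 : #|'O_3(H / nu H c)| = 1%N.
    rewrite (card_isog iso3).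
    have -> : #|'O_3(G)%G| = #|'O_3(G)| by [].
    by rewrite O31 cards1.
  have sq : 'O_3(H) / Z \subset 'O_3(H / Z) by apply: morphim_pcore.
  have sOZ : 'O_3(H) \subset Z.
    rewrite -quotient_sub1; last exact: subset_trans (pcore_sub _ _) nZH.
    apply: subset_trans sq _.
    by rewrite (card1_trivg c3).
  apply: (case_c1 cZ c1).
  apply: subset_trans sOZ.
  exact: pcore_max (HQ_3group cH) (HQ_normal H).
split; first exact: FG_iso.
apply: S3_of_card6; last exact: trivg_pcore_quotient.
rewrite card_quotient ?normal_norm ?pcore_normal // -divgS ?pcore_sub //.
rewrite cG (cO2 a1 cG nnG ntO3).
rewrite -(prednK a1) expnS /= mulnAC mulnK //.
by rewrite expn_gt0.
Qed.
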